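(* Let $(X,d)$ be a proper metric space and $X+_fW$ a Hausdorff compactification of $X$ that is perspective with respect to the bounded coarse structure $\varepsilon_d$. Then for every $u\in\mathfrak{U}_f$ and every $t>0$ there is a bounded set $S\subseteq X$ such that $(x,y)\in u$ for all $x,y\in X\setminus S$ with $d(x,y)<t$.
   Context: $X+_fW$ is $X\sqcup W$ with closed sets the $D$ with $D\cap X$ closed in $X$, $D\cap W$ closed in $W$, $f(D\cap X)\subseteq D$, for an admissible $f$ (sending $\emptyset$ to $\emptyset$, preserving finite unions); a Hausdorff compactification means it is compact Hausdorff with $X$ dense. $\mathfrak{U}_f$ is its unique compatible uniform structure. $\varepsilon_d=\{e\subseteq X\times X:\sup_{(x,y)\in e}d(x,y)<\infty\}$. Perspective means every $e\in\varepsilon_d$ satisfies $\mathrm{Cl}_{(X+_fW)^2}(e)\cap((X+_fW)^2-X^2)\subseteq\{(p,p):p\in W\}$. *)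

(* Defs.v *)
From Stdlib Require Import Reals List.
Open Scope R_scope.

Definition is_topology {T : Type} (opn : (T -> Prop) -> Prop) : Prop :=
  opn (fun _ => True) /\ opn (fun _ => False) /\
  (forall U V, opn U -> opn V -> opn (fun x => U x /\ V x)) /\
  (forall (I : Type) (F : I -> T -> Prop), (forall i, opn (F i)) ->
     opn (fun x => exists i, F i x)).

Definition compact_in {T : Type} (opn : (T -> Prop) -> Prop) (K : T -> Prop) : Prop :=
  forall (I : Type) (U : I -> T -> Prop), (forall i, opn (U i)) ->
    (forall x, K x -> exists i, U i x) ->
    exists l : list I, forall x, K x -> exists i, In i l /\ U i x.

Definition hausdorff {T : Type} (opn : (T -> Prop) -> Prop) : Prop :=
  forall x y : T, x <> y -> exists U V, opn U /\ opn V /\ U x /\ V y /\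
    (forall z, ~ (U z /\ V z)).

Definition closure {T : Type} (opn : (T -> Prop) -> Prop) (A : T -> Prop) (p : T) : Prop :=
  forall U, opn U -> U p -> exists q, A q /\ U q.

Definition prod_open {T1 T2 : Type} (opn1 : (T1 -> Prop) -> Prop)
  (opn2 : (T2 -> Prop) -> Prop) (O : T1 * T2 -> Prop) : Prop :=
  forall p, O p -> exists U V, opn1 U /\ opn2 V /\ U (fst p) /\ V (snd p) /\
    (forall a b, U a -> V b -> O (a, b)).

Definition is_uniformity {T : Type} (Uc : (T * T -> Prop) -> Prop) : Prop :=
  Uc (fun _ => True) /\
  (forall u v, Uc u -> (forall p, u p -> v p) -> Uc v) /\
  (forall u v, Uc u -> Uc v -> Uc (fun p => u p /\ v p)) /\
  (forall u, Uc u -> forall x, u (x, x)) /\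
  (forall u, Uc u -> Uc (fun p => u (snd p, fst p))) /\
  (forall u, Uc u -> exists v, Uc v /\
     forall x y z, v (x, y) -> v (y, z) -> u (x, z)).

Definition uniformity_compatible {T : Type} (Uc : (T * T -> Prop) -> Prop)
  (opn : (T -> Prop) -> Prop) : Prop :=
  forall O, opn O <-> (forall p, O p -> exists u, Uc u /\ forall q, u (p, q) -> O q).

Definition is_metric {X : Type} (d : X -> X -> R) : Prop :=
  (forall x y, d x y = 0 <-> x = y) /\
  (forall x y, d x y = d y x) /\
  (forall x y z, d x z <= d x y + d y z).

Definition metric_open {X : Type} (d : X -> X -> R) (U : X -> Prop) : Prop :=
  forall x, U x -> exists eps, 0 < eps /\ forall y, d x y < eps -> U y.

Definition metric_closed {X : Type} (d : X -> X -> R) (A : X -> Prop) : Prop :=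
  metric_open d (fun x => ~ A x).

Definition metric_bounded {X : Type} (d : X -> X -> R) (A : X -> Prop) : Prop :=
  exists r, forall x y, A x -> A y -> d x y <= r.

Definition proper_metric {X : Type} (d : X -> X -> R) : Prop :=
  forall K, metric_closed d K -> metric_bounded d K -> compact_in (metric_open d) K.

Definition admissible {X W : Type} (f : (X -> Prop) -> (W -> Prop)) : Prop :=
  (forall w, ~ f (fun _ => False) w) /\
  (forall A B w, f (fun x => A x \/ B x) w <-> (f A w \/ f B w)).

Definition closed_sumf {X W : Type} (d : X -> X -> R) (openW : (W -> Prop) -> Prop)
  (f : (X -> Prop) -> (W -> Prop)) (D : X + W -> Prop) : Prop :=
  metric_closed d (fun x => D (inl x)) /\
  openW (fun w => ~ D (inr w)) /\
  (forall w, f (fun x => D (inl x)) w -> D (inr w)).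

Definition open_sumf {X W : Type} (d : X -> X -> R) (openW : (W -> Prop) -> Prop)
  (f : (X -> Prop) -> (W -> Prop)) (O : X + W -> Prop) : Prop :=
  closed_sumf d openW f (fun p => ~ O p).

Definition hausdorff_compactification {X W : Type} (d : X -> X -> R)
  (openW : (W -> Prop) -> Prop) (f : (X -> Prop) -> (W -> Prop)) : Prop :=
  compact_in (open_sumf d openW f) (fun _ => True) /\
  hausdorff (open_sumf d openW f) /\
  (forall O, open_sumf d openW f O -> (exists p, O p) -> exists x, O (inl x)).

Definition in_eps_d {X : Type} (d : X -> X -> R) (e : X * X -> Prop) : Prop :=
  exists r, forall x y, e (x, y) -> d x y <= r.

Definition is_inl {X W : Type} (p : X + W) : Prop :=
  match p with inl _ => True | inr _ => False end.

Definition perspective {X W : Type} (d : X -> X -> R) (openW : (W -> Prop) -> Prop)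
  (f : (X -> Prop) -> (W -> Prop)) : Prop :=
  forall e : X * X -> Prop, in_eps_d d e ->
    forall p q : X + W,
      closure (prod_open (open_sumf d openW f) (open_sumf d openW f))
        (fun r : (X + W) * (X + W) =>
           exists x y, e (x, y) /\ r = (inl x, inl y)) (p, q) ->
      ~ (is_inl p /\ is_inl q) ->
      exists w, p = inr w /\ q = inr w.

(* Main.v *)
Require Import Defs.
From Stdlib Require Import Reals.
From Stdlib Require Import Classical FunctionalExtensionality PropExtensionality List Lra.
Open Scope R_scope.

Lemma pred_ext {T : Type} (P Q : T -> Prop) : (forall x, P x <-> Q x) -> P = Q.
Proof.
  intro H; apply functional_extensionality; intro x; apply propositional_extensionality; auto.
Qed.

Lemma openW_ext {W : Type} (openW : (W -> Prop) -> Prop) (P Q : W -> Prop) :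
  (forall x, P x <-> Q x) -> openW P -> openW Q.
Proof. intros H; rewrite (pred_ext P Q H); auto. Qed.

Section S.
Context (X W : Type) (d : X -> X -> R) (openW : (W -> Prop) -> Prop)
  (f : (X -> Prop) -> (W -> Prop))
  (Hd : is_metric d) (HW : is_topology openW) (Hf : admissible f).

Lemma open_True : open_sumf d openW f (fun _ => True).
Proof.
  destruct HW as [HT [HF _]].
  unfold open_sumf, closed_sumf, metric_closed, metric_open.
  split; [|split].
  - intros x _. exists 1. split; [lra|]. intros y _ N. apply N. exact I.
  - eapply openW_ext; [|exact HT]. intro; simpl; tauto.
  - intros w Hw. exfalso.
    rewrite (pred_ext (fun _ : X => ~ True) (fun _ => False)) in Hw by (intro; tauto).
    exact (proj1 Hf w Hw).
Qed.

Lemma f_mono (A B : X -> Prop) w : (forall x, A x -> B x) -> f A w -> f B w.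
Proof.
  intros H HA.
  rewrite (pred_ext B (fun x => A x \/ B x)) by (intro x; split; auto; intros [h|h]; auto).
  apply (proj2 Hf). left; exact HA.
Qed.

Lemma open_and O1 O2 : open_sumf d openW f O1 -> open_sumf d openW f O2 ->
  open_sumf d openW f (fun p => O1 p /\ O2 p).
Proof.
  destruct HW as [_ [_ [Hi _]]].
  unfold open_sumf, closed_sumf, metric_closed, metric_open.
  intros [h1 [h2 h3]] [g1 [g2 g3]]. split; [|split].
  - intros x Hx. apply NNPP in Hx. destruct Hx as [a b].
    destruct (h1 x (fun H => H a)) as [e1 [He1 H1]].
    destruct (g1 x (fun H => H b)) as [e2 [He2 H2]].
    exists (Rmin e1 e2). split. apply Rmin_pos; auto.
    intros y Hy N.
    assert (y1 : d x y < e1) by (eapply Rlt_le_trans; [exact Hy| apply Rmin_l]).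
    assert (y2 : d x y < e2) by (eapply Rlt_le_trans; [exact Hy| apply Rmin_r]).
    apply (H1 y y1); intro; apply (H2 y y2); intro; apply N; split; auto.
  - eapply openW_ext; [|exact (Hi _ _ h2 g2)]. intro; simpl; tauto.
  - intros w Hw.
    assert (Hw' : f (fun x => ~ O1 (inl x) \/ ~ O2 (inl x)) w).
    { eapply f_mono; [|exact Hw]. intros x Hx. simpl in Hx.
      destruct (classic (O1 (inl x))); [right|left]; tauto. }
    apply (proj2 Hf (fun x => ~ O1 (inl x)) (fun x => ~ O2 (inl x))) in Hw'.
    destruct Hw' as [a|a]; [apply h3 in a|apply g3 in a]; simpl in *; tauto.
Qed.

Lemma open_list {I : Type} (l : list I) (g : I -> (X + W) -> Prop) :
  (forall i, open_sumf d openW f (g i)) ->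
  open_sumf d openW f (fun p => forall i, In i l -> g i p).
Proof.
  intro Hg. induction l as [|a l IH].
  - rewrite (pred_ext (fun p => forall i, In i nil -> g i p) (fun _ => True)). apply open_True.
    intro; simpl; split; auto; intros _ i [].
  - rewrite (pred_ext (fun p => forall i, In i (a :: l) -> g i p) (fun p => g a p /\ (forall i, In i l -> g i p))).
    apply open_and; auto.
    intro p; simpl; split.
    + intro H; split; auto.
    + intros [h1 h2] i [<-|Hi]; auto.
Qed.

Lemma open_ball c : open_sumf d openW f
  (fun p => match p with inl x => d c x < 1 | inr _ => False end).
Proof.
  destruct Hd as [_ [_ Htri]]. destruct HW as [_ [HF _]].
  unfold open_sumf, closed_sumf, metric_closed, metric_open.
  split; [|split].
  - intros x Hx. apply NNPP in Hx.
    exists (1 - d c x). split; [lra|]. intros y Hy N. apply N.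
    specialize (Htri c x y). lra.
  - eapply openW_ext; [|exact HF]. intro; simpl; tauto.
  - intros w _ H. exact H.
Qed.

End S.

Theorem mainTheorem18 (X W : Type) (d : X -> X -> R) (openW : (W -> Prop) -> Prop)
  (f : (X -> Prop) -> (W -> Prop))
  (Hd : is_metric d) (Hproper : proper_metric d)
  (HW : is_topology openW) (Hf : admissible f)
  (Hcomp : hausdorff_compactification d openW f)
  (Hpersp : perspective d openW f)
  (Uf : ((X + W) * (X + W) -> Prop) -> Prop)
  (HUf : is_uniformity Uf)
  (HUfc : uniformity_compatible Uf (open_sumf d openW f)) :
  forall u, Uf u -> forall t, 0 < t ->
    exists S : X -> Prop, metric_bounded d S /\
      forall x y, ~ S x -> ~ S y -> d x y < t -> u (inl x, inl y).
Proof.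
  intros u Hu t Ht.
  destruct HUf as [UT [Umono [Uand [Urefl [Usym Ucomp]]]]].
  destruct Hd as [Hd0 [Hsym Htri]].
  set (opn := open_sumf d openW f).
  set (e := fun p : X * X => d (fst p) (snd p) < t /\ ~ u (inl (fst p), inl (snd p))).
  set (A := fun x => exists y, e (x, y)).
  exists A. split.
  2: { intros x y HSx _ Hxy. apply NNPP. intro N. apply HSx. exists y. split; auto. }
  set (E := fun r : (X + W) * (X + W) => exists x y, e (x, y) /\ r = (inl x, inl y)).
  assert (K : forall w, exists O, opn O /\ O (inr w) /\ forall x, O (inl x) -> ~ A x).
  { intro w. apply NNPP; intro Hno.
    assert (Hmeet : forall O, opn O -> O (inr w) -> exists x, O (inl x) /\ A x).
    { intros O Ho Hw. apply NNPP; intro N. apply Hno. exists O. split; auto. split; auto.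
      intros x Hx HA. apply N. exists x; auto. }
    assert (Hq : exists q, closure (prod_open opn opn) E (inr w, q)).
    { apply NNPP; intro Nq.
      set (I := {UV : ((X + W) -> Prop) * ((X + W) -> Prop) |
                 opn (fst UV) /\ opn (snd UV) /\ fst UV (inr w) /\
                 forall x y, fst UV (inl x) -> snd UV (inl y) -> ~ e (x, y)}).
      destruct (proj1 Hcomp I (fun i => snd (proj1_sig i))) as [l Hl].
      - intro i. exact (proj1 (proj2 (proj2_sig i))).
      - intros q _.
        assert (H : ~ closure (prod_open opn opn) E (inr w, q)) by (intro C; apply Nq; exists q; exact C).
        unfold closure in H. destruct (not_all_ex_not _ _ H) as [P HP].
        apply imply_to_and in HP. destruct HP as [HP1 HP].
        apply imply_to_and in HP. destruct HP as [HP2 HP].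
        destruct (HP1 _ HP2) as [U [V [HU [HV [HUw [HVq HUV]]]]]].
        simpl in HUw, HVq.
        unshelve eexists (exist _ (U, V) _).
        + simpl. split; auto. split; auto. split; auto.
          intros x y Ux Vy ex. apply HP. exists (inl x, inl y). split.
          * exists x, y; auto.
          * apply HUV; auto.
        + simpl. exact HVq.
      - set (U0 := fun p => forall i, In i l -> fst (proj1_sig i) p).
        assert (HU0 : opn U0).
        { apply open_list; auto. intro i. exact (proj1 (proj2_sig i)). }
        destruct (Hmeet U0 HU0) as [x [Hx [y Hxy]]].
        { intros i _. exact (proj1 (proj2 (proj2 (proj2_sig i)))). }
        destruct (Hl (inl y) Logic.I) as [i [Hi Hiy]].
        exact (proj2 (proj2 (proj2 (proj2_sig i))) x y (Hx i Hi) Hiy Hxy). }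
    destruct Hq as [q C].
    destruct (Hpersp e) with (p := inr w : X + W) (q := q) as [w' [Hw' Hq]].
    { exists t. intros x y [h _]. simpl in h. lra. }
    { exact C. }
    { simpl. tauto. }
    injection Hw' as <-. subst q.
    destruct (Ucomp u Hu) as [v1 [Hv1 Hc1]].
    set (v := fun p : (X + W) * (X + W) => v1 p /\ v1 (snd p, fst p)).
    assert (Hv : Uf v) by (apply Uand; auto).
    set (O := fun q => exists v', Uf v' /\ forall r, v' (q, r) -> v (inr w, r)).
    assert (HO : opn O).
    { apply HUfc. intros q [v' [Hv' Hq]]. destruct (Ucomp v' Hv') as [v'' [Hv'' Hc]].
      exists v''. split; auto. intros q' Hqq'. exists v''. split; auto.
      intros r Hr. apply Hq. apply Hc with q'; auto. }
    assert (HOv : forall q, O q -> v (inr w, q)).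
    { intros q [v' [Hv' Hq]]. apply Hq. apply Urefl; auto. }
    destruct (C (fun r => O (fst r) /\ O (snd r))) as [r [[x [y [Hxy ->]]] [Ox Oy]]].
    - intros p [h1 h2]. exists O, O. split; [exact HO|]. split; [exact HO|]. split; [exact h1|]. split; [exact h2|]. intros a b ha hb; simpl; auto.
    - simpl. split; exists v; split; auto.
    - simpl in Ox, Oy. apply HOv in Ox. apply HOv in Oy.
      destruct Hxy as [_ Hn]. apply Hn. simpl.
      destruct Ox as [_ Ox]. destruct Oy as [Oy _]. simpl in *.
      exact (Hc1 _ _ _ Ox Oy). }
  set (I2 := {O : (X + W) -> Prop | opn O /\
     ((forall x, O (inl x) -> ~ A x) \/ exists c, forall x, O (inl x) -> d c x < 1)}).
  destruct (proj1 Hcomp I2 (fun i => proj1_sig i)) as [l Hl].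
  - intro i. exact (proj1 (proj2_sig i)).
  - intros p _. destruct p as [c|w].
    + unshelve eexists (exist _ (fun p => match p with inl x => d c x < 1 | inr _ => False end) _).
      * split. apply open_ball; auto. split; auto. right. exists c. auto.
      * simpl. rewrite (proj2 (Hd0 c c) eq_refl). lra.
    + destruct (K w) as [O [HO [Hw HA]]].
      exists (exist _ O (conj HO (or_introl HA))). exact Hw.
  - assert (HB : forall (l : list I2) x0, exists M, forall i, In i l -> forall x,
               proj1_sig i (inl x) -> A x -> d x0 x <= M).
    { intros l0 x0. induction l0 as [|a l0 IH].
      - exists 0. intros i [].
      - destruct IH as [M HM]. destruct (proj2 (proj2_sig a)) as [Hn|[c Hc]].
        + exists M. intros i [<-|Hi] x Hx HA.
          * exfalso. exact (Hn x Hx HA).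
          * eauto.
        + exists (Rmax M (d x0 c + 1)). intros i [<-|Hi] x Hx HA.
          * specialize (Hc x Hx). specialize (Htri x0 c x).
            eapply Rle_trans; [|apply Rmax_r]. lra.
          * eapply Rle_trans; [|apply Rmax_l]. eauto. }
    destruct (classic (exists x0, A x0)) as [[x0 _]|Hn].
    + destruct (HB l x0) as [M HM]. exists (2 * M). intros x y Ax Ay.
      destruct (Hl (inl x) Logic.I) as [i [Hi Hix]].
      destruct (Hl (inl y) Logic.I) as [j [Hj Hjy]].
      pose proof (HM i Hi x Hix Ax). pose proof (HM j Hj y Hjy Ay).
      pose proof (Htri x x0 y). rewrite (Hsym x x0) in H1. lra.
    + exists 0. intros x y Ax. exfalso. apply Hn. exists x; auto.
Qed.
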